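(* Let $(X,d)$ be a complete metric space and $H(X)$ the space of nonempty compact subsets of $X$ with the Hausdorff metric $h$. Fix $n\in\mathbb{N}$ and for each $i\in\mathbb{N}$ let $F_i=\{X;f_{1,i},\dots,f_{n,i}\}$ with continuous maps $f_{r,i}:X\to X$, each a $\phi$-contraction with comparison function $\phi_{r,i}$; let $F_i(A)=\bigcup_{r=1}^n f_{r,i}(A)$ for $A\in H(X)$ and $\phi_i=\max_{r}\phi_{r,i}$. Suppose there is $A_1\in H(X)$ with $\sup_{i\in\mathbb{N}}h(F_i(A_1),A_1)<\infty$, and that $$\sum_{k=1}^\infty\phi_1\circ\phi_2\circ\cdots\circ\phi_k(t)<\infty\quad\text{for every }t>0.$$ Then there is a unique set $A^*\in H(X)$ such that for every $A\in H(X)$ the backward trajectory $\Psi_k(A)=F_1\circ F_2\circ\cdots\circ F_k(A)$ converges to $A^*$ in $(H(X),h)$.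
   Context: A comparison function is a non-decreasing map $\phi:[0,\infty)\to[0,\infty)$ such that $\phi^p(t)\to0$ as $p\to\infty$ for every $t\ge0$ ($\phi^p$ the $p$-fold composition). A map $f:X\to X$ is a $\phi$-contraction if $d(f(x),f(y))\le\phi(d(x,y))$ for all $x,y$. The Hausdorff metric is $h(A,B)=\max\{\max_{x\in A}\min_{y\in B}d(x,y),\max_{y\in B}\min_{x\in A}d(x,y)\}$. *)

(* Defs.v *)
From HB Require Import structures.
From mathcomp Require Import all_boot all_order all_algebra.
From mathcomp Require Import all_classical all_reals all_analysis.
Set Implicit Arguments. Unset Strict Implicit. Unset Printing Implicit Defensive.
Import Order.TTheory GRing.Theory Num.Theory.
Local Open Scope classical_set_scope.
Local Open Scope ring_scope.

Section Defs.
Variables (R : realType) (X : Type) (d : X -> X -> R).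

Definition is_metric : Prop :=
  [/\ forall x y, 0 <= d x y,
      forall x y, d x y = 0 <-> x = y,
      forall x y, d x y = d y x &
      forall x y z, d x z <= d x y + d y z].

Definition metric_complete : Prop :=
  forall u : nat -> X,
    (forall e : R, 0 < e -> exists N : nat, forall m n : nat,
        (N <= m)%N -> (N <= n)%N -> d (u m) (u n) < e) ->
    exists x : X, forall e : R, 0 < e -> exists N : nat, forall n : nat,
        (N <= n)%N -> d (u n) x < e.

Definition dball (x : X) (e : R) : set X := [set y | d x y < e].

Definition dopen (U : set X) : Prop :=
  forall x, U x -> exists2 e : R, 0 < e & dball x e `<=` U.

Definition dcompact (A : set X) : Prop :=
  forall (I : Type) (U : I -> set X),
    (forall i, dopen (U i)) -> A `<=` \bigcup_i U i ->
    exists J : set I, finite_set J /\ A `<=` \bigcup_(i in J) U i.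

Definition inHX (A : set X) : Prop := A !=set0 /\ dcompact A.

Definition dcontinuous (f : X -> X) : Prop :=
  forall x e, 0 < e -> exists2 del : R, 0 < del &
    forall y, d x y < del -> d (f x) (f y) < e.

Definition hexcess (A B : set X) : R :=
  sup [set inf [set d x y | y in B] | x in A].

Definition hausdorff (A B : set X) : R := Num.max (hexcess A B) (hexcess B A).

Definition phi_contraction (phi : R -> R) (f : X -> X) : Prop :=
  forall x y, d (f x) (f y) <= phi (d x y).
End Defs.

Definition comparison_function (R : realType) (phi : R -> R) : Prop :=
  [/\ forall t, 0 <= t -> 0 <= phi t,
      forall s t, 0 <= s -> s <= t -> phi s <= phi t &
      forall t, 0 <= t -> (fun p : nat => iter p phi t) @ \oo --> 0].

Definition IFS_image (X : Type) (n : nat) (f : 'I_n -> nat -> X -> X)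
  (i : nat) (A : set X) : set X :=
  \bigcup_(r in [set: 'I_n]) (f r i @` A).

Definition backward_traj (X : Type) (n : nat) (f : 'I_n -> nat -> X -> X)
  (k : nat) (A : set X) : set X :=
  foldr (fun i B => IFS_image f i B) A (iota 1 k).

Definition phi_max (R : realType) (n : nat) (phi : 'I_n -> nat -> R -> R)
  (i : nat) (t : R) : R :=
  \big[Num.max/0]_(r < n) phi r i t.

Definition phi_comp (R : realType) (n : nat) (phi : 'I_n -> nat -> R -> R)
  (k : nat) (t : R) : R :=
  foldr (fun i s => phi_max phi i s) t (iota 1 k).

(* Main.v *)
Require Import Defs.
From HB Require Import structures.
From mathcomp Require Import all_boot all_order all_algebra.
From mathcomp Require Import all_classical all_reals all_analysis.
Import Order.TTheory GRing.Theory Num.Theory.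
Local Open Scope classical_set_scope.
Local Open Scope ring_scope.
Import numFieldNormedType.Exports.
Set Implicit Arguments. Unset Strict Implicit.

Definition compw (X : Type) (n : nat) (f : 'I_n -> nat -> X -> X)
  (s : nat -> 'I_n) (m k : nat) (x : X) : X :=
  foldr (fun i y => f (s i) i y) x (iota m k).

Definition phcm (R : realType) (n : nat) (phi : 'I_n -> nat -> R -> R)
  (m k : nat) (t : R) : R :=
  foldr (fun i u => phi_max phi i u) t (iota m k).

Definition updw (n : nat) (w : nat -> 'I_n) (k : nat) (r : 'I_n) : nat -> 'I_n :=
  fun i => if i == k then r else w i.

Lemma compw_agree (X : Type) (n : nat) (f : 'I_n -> nat -> X -> X)
  (s s' : nat -> 'I_n) (m k : nat) (x : X) :
  (forall i, (m <= i < m + k)%N -> s i = s' i) ->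
  compw f s m k x = compw f s' m k x.
Proof.
elim: k m => [|k IH] m H //=.
rewrite /compw /= -/(compw f s m.+1 k x) -/(compw f s' m.+1 k x).
rewrite H; last by rewrite leqnn /= addnS ltnS leq_addr.
rewrite IH // => i /andP[h1 h2]; apply: H.
by rewrite (ltnW h1) /= addnS -addSn.
Qed.

Lemma compw_S (X : Type) (n : nat) (f : 'I_n -> nat -> X -> X)
  (s : nat -> 'I_n) (m k : nat) (x : X) :
  compw f s m k.+1 x = compw f s m k (f (s (m + k)%N) (m + k)%N x).
Proof. by rewrite /compw -addn1 iotaD foldr_cat. Qed.

Lemma traj_char (X : Type) (n : nat) (f : 'I_n -> nat -> X -> X) (r0 : 'I_n)
  (A : set X) (m k : nat) (y : X) :
  foldr (fun i B => IFS_image f i B) A (iota m k) y <->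
  exists s a, A a /\ y = compw f s m k a.
Proof.
elim: k m y => [|k IH] m y /=.
  split; first by move=> Ay; exists (fun _ => r0), y.
  by case=> s [a [Aa ->]].
split.
  case=> r _ [z /IH [s [a [Aa ->]]] <-].
  exists (updw s m r), a; split => //.
  rewrite /compw /= -/(compw f (updw s m r) m.+1 k a).
  rewrite /updw eqxx; congr (f r m _).
  apply: compw_agree => i /andP[h1 _].
  by rewrite /updw (gtn_eqF h1).
case=> s [a [Aa ->]].
rewrite /compw /= -/(compw f s m.+1 k a).
exists (s m) => //; exists (compw f s m.+1 k a) => //.
by apply/IH; exists s, a.
Qed.

Lemma phi_max_ge0 (R : realType) (n : nat) (phi : 'I_n -> nat -> R -> R) i t :
  0 <= phi_max phi i t.
Proof.
rewrite /phi_max; elim/big_rec: _ => // r y _ hy.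
by rewrite le_max hy orbT.
Qed.

Lemma phi_max_ub (R : realType) (n : nat) (phi : 'I_n -> nat -> R -> R) r i t :
  phi r i t <= phi_max phi i t.
Proof. exact: (le_bigmax 0 (fun r => phi r i t) r). Qed.

Lemma phi_max_mono (R : realType) (n : nat) (phi : 'I_n -> nat -> R -> R) i s t :
  (forall r, phi r i s <= phi r i t) -> phi_max phi i s <= phi_max phi i t.
Proof. by move=> H; apply: le_bigmax2 => r _; apply: H. Qed.

Lemma phcm_ge0 (R : realType) (n : nat) (phi : 'I_n -> nat -> R -> R) m k t :
  0 <= t -> 0 <= phcm phi m k t.
Proof. by case: k => [|k] //= _; apply: phi_max_ge0. Qed.

Lemma phcm_mono (R : realType) (n : nat) (phi : 'I_n -> nat -> R -> R)
  (hphi : forall r i, (1 <= i)%N -> comparison_function (phi r i)) m k s t :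
  (1 <= m)%N -> 0 <= s -> s <= t -> phcm phi m k s <= phcm phi m k t.
Proof.
move=> hm hs hst; elim: k m hm => [|k IH] m hm //=.
apply: phi_max_mono => r.
have [_ hmono _] := hphi r m hm.
apply: hmono; first exact: phcm_ge0.
exact: IH.
Qed.

Lemma compw_contr (R : realType) (X : Type) (d : X -> X -> R) (hmet : is_metric d)
  (n : nat) (f : 'I_n -> nat -> X -> X) (phi : 'I_n -> nat -> R -> R)
  (hphi : forall r i, (1 <= i)%N -> comparison_function (phi r i))
  (hcontr : forall r i, (1 <= i)%N -> phi_contraction d (phi r i) (f r i))
  s m k x y : (1 <= m)%N ->
  d (compw f s m k x) (compw f s m k y) <= phcm phi m k (d x y).
Proof.
have [d0 _ _ _] := hmet.
elim: k m => [|k IH] m hm //=.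
rewrite /compw /= -/(compw f s m.+1 k x) -/(compw f s m.+1 k y).
apply: le_trans (hcontr _ _ hm _ _) _.
apply: le_trans (phi_max_ub phi (s m) m _) _.
apply: phi_max_mono => r.
have [_ hmono _] := hphi r m hm.
apply: hmono; first exact: d0.
exact: IH.
Qed.

Lemma finite_nat_bnd (J : set nat) : finite_set J -> exists N, forall j, J j -> (j <= N)%N.
Proof.
move=> /finite_fsetP [B ->].
exists (\max_(i <- finmap.enum_fset B) i)%N => j jB.
exact: (@leq_bigmax_seq _ (finmap.enum_fset B) xpredT id j jB erefl).
Qed.

Lemma dball_open (R : realType) (X : Type) (d : X -> X -> R) (hmet : is_metric d) x e :
  dopen d (dball d x e).
Proof.
have [d0 _ dS dT] := hmet.
move=> y; rewrite /dball /= => hy.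
exists (e - d x y); first by rewrite subr_gt0.
move=> z; rewrite /dball /= => hz.
apply: le_lt_trans (dT x y z) _.
by rewrite -ltrBrDl.
Qed.

Lemma far_open (R : realType) (X : Type) (d : X -> X -> R) (hmet : is_metric d) x e :
  dopen d [set y | e < d x y].
Proof.
have [d0 _ dS dT] := hmet.
move=> y /= hy.
exists (d x y - e); first by rewrite subr_gt0.
move=> z; rewrite /dball /= => hz.
have := dT x z y; rewrite (dS z y) => h.
have : d x y - d y z <= d x z by rewrite lerBlDr.
apply: lt_le_trans.
by rewrite ltrBrDl addrC -ltrBrDl.
Qed.

Lemma compact_bnd (R : realType) (X : Type) (d : X -> X -> R) (hmet : is_metric d)
  (A : set X) : dcompact d A -> forall z, exists c, forall a, A a -> d z a <= c.
Proof.
have [d0 _ dS dT] := hmet.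
move=> hA z.
have [J [fJ hJ]] := hA nat (fun k => dball d z k%:R) (fun k => @dball_open _ _ _ hmet z _)
  (fun a _ => ex_intro2 _ _ (Num.bound (d z a)) I (archi_boundP (d0 z a))).
have [N hN] := finite_nat_bnd fJ.
exists N%:R => a /hJ [j /hN hj]; rewrite /dball /= => h.
apply/ltW/(lt_le_trans h).
by rewrite ler_nat.
Qed.

Lemma dcompact_closed (R : realType) (X : Type) (d : X -> X -> R) (hmet : is_metric d)
  (A : set X) x : dcompact d A ->
  (forall e, 0 < e -> exists y, A y /\ d x y < e) -> A x.
Proof.
have [d0 dE dS dT] := hmet.
move=> hA hx; apply/not_notP => nAx.
have cov : A `<=` \bigcup_(k in setT) [set y | (k.+1%:R)^-1 < d x y].
  move=> y Ay.
  have dpos : 0 < d x y.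
    rewrite lt_neqAle d0 andbT eq_sym; apply/eqP => /dE h.
    by apply: nAx; rewrite h.
  exists (Num.bound ((d x y)^-1)) => //=.
  rewrite invf_plt ?posrE //.
  have hb : 0 <= (d x y)^-1 by rewrite invr_ge0 ltW.
  have := archi_boundP hb.
  by move/lt_trans; apply; rewrite ltr_nat.
have [J [fJ hJ]] := hA nat _ (fun k => @far_open _ _ _ hmet x _) cov.
have [N hN] := finite_nat_bnd fJ.
have [y [Ay hy]] := hx (N.+1%:R)^-1 (ltac:(by rewrite invr_gt0 ltr0n)).
have [j /hN hj /= hj'] := hJ y Ay.
have := lt_trans hj' hy.
rewrite ltf_pV2 ?posrE // ltr_nat ltnS => h.
by have := leq_trans h hj; rewrite ltnn.
Qed.

Lemma inf_dist_ge0 (R : realType) (X : Type) (d : X -> X -> R) (hmet : is_metric d)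
  (Q : set X) x : Q !=set0 -> 0 <= inf [set d x y | y in Q].
Proof.
have [d0 _ _ _] := hmet.
move=> [y Qy]; apply: lb_le_inf; first by exists (d x y), y.
by move=> z [y' _ <-].
Qed.

Lemma inf_dist_le (R : realType) (X : Type) (d : X -> X -> R) (hmet : is_metric d)
  (Q : set X) x y : Q y -> inf [set d x y | y in Q] <= d x y.
Proof.
have [d0 _ _ _] := hmet.
move=> Qy; apply: ge_inf; last by exists y.
by exists 0 => z [y' _ <-].
Qed.

Lemma hexcess_le (R : realType) (X : Type) (d : X -> X -> R) (hmet : is_metric d)
  (P Q : set X) c : P !=set0 ->
  (forall x, P x -> exists y, Q y /\ d x y <= c) -> hexcess d P Q <= c.
Proof.
move=> [x Px] H; apply: ge_sup; first by exists (inf [set d x y | y in Q]), x.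
move=> z [x' Px' <-].
have [y [Qy hy]] := H x' Px'.
exact: le_trans (inf_dist_le hmet x' Qy) hy.
Qed.

Lemma hexcess_ge0 (R : realType) (X : Type) (d : X -> X -> R) (hmet : is_metric d)
  (P Q : set X) : Q !=set0 -> 0 <= hexcess d P Q.
Proof.
move=> hQ; rewrite /hexcess.
have [hs|hs] := pselect (has_sup [set inf [set d x y | y in Q] | x in P]); last first.
  by rewrite sup_out.
have [[z [x Px hz]] _] := hs.
apply: le_trans (inf_dist_ge0 hmet x hQ) _.
by apply: sup_upper_bound => //; exists x.
Qed.

Lemma hexcess_lt (R : realType) (X : Type) (d : X -> X -> R) (hmet : is_metric d)
  (P Q : set X) c e : Q !=set0 ->
  (forall x, P x -> exists y, Q y /\ d x y <= c) -> hexcess d P Q < e ->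
  forall x, P x -> exists y, Q y /\ d x y < e.
Proof.
move=> hQ H he x Px.
have hub : has_ubound [set inf [set d x y | y in Q] | x in P].
  exists c => z [x' Px' <-].
  have [y [Qy hy]] := H x' Px'.
  exact: le_trans (inf_dist_le hmet x' Qy) hy.
have : inf [set d x y | y in Q] < e.
  apply: le_lt_trans he; rewrite /hexcess.
  by apply: ub_le_sup => //; exists x.
have [y Qy] := hQ.
case/inf_lt; first by exists (d x y), y.
by move=> z [y' Qy' <-] hz; exists y'.
Qed.

Lemma hausdorff_le (R : realType) (X : Type) (d : X -> X -> R) (A B : set X) c :
  hexcess d A B <= c -> hexcess d B A <= c -> hausdorff d A B <= c.
Proof. by move=> h1 h2; rewrite /hausdorff ge_max h1 h2. Qed.

Lemma hausdorff_ge_l (R : realType) (X : Type) (d : X -> X -> R) (A B : set X) :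
  hexcess d A B <= hausdorff d A B.
Proof. by rewrite /hausdorff le_max lexx. Qed.

Lemma hausdorff_ge_r (R : realType) (X : Type) (d : X -> X -> R) (A B : set X) :
  hexcess d B A <= hausdorff d A B.
Proof. by rewrite /hausdorff le_max lexx orbT. Qed.

Fixpoint Wseq (n : nat) (ch : nat -> (nat -> 'I_n) -> 'I_n) (w0 : nat -> 'I_n)
  (k : nat) : nat -> 'I_n :=
  match k with
  | 0 => w0
  | k'.+1 => updw (Wseq ch w0 k') k' (ch k' (Wseq ch w0 k'))
  end.

Lemma Wseq_agree (n : nat) (ch : nat -> (nat -> 'I_n) -> 'I_n) (w0 : nat -> 'I_n) k i :
  (i < k)%N -> Wseq ch w0 k i = Wseq ch w0 i.+1 i.
Proof.
elim: k => [|k IH] //.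
rewrite ltnS leq_eqVlt => /orP[/eqP -> // | hik].
by rewrite /= /updw (ltn_eqF hik) IH.
Qed.

Lemma image_compact (R : realType) (X : Type) (d : X -> X -> R)
  (n : nat) (r0 : 'I_n) (pi : (nat -> 'I_n) -> X) :
  (forall e, 0 < e -> exists k, forall s t,
      (forall i, (i < k)%N -> s i = t i) -> d (pi s) (pi t) < e) ->
  dcompact d (range pi).
Proof.
move=> H I U Uo cov; apply/not_notP => nfin.
pose good k w := exists J : set I, finite_set J /\
  [set pi t | t in [set t | forall i, (i < k)%N -> t i = w i]] `<=` \bigcup_(i in J) U i.
have step : forall k w, ~ good k w -> exists r, ~ good k.+1 (updw w k r).
  move=> k w ng.
  have [[r hr]|hall] := pselect (exists r, ~ good k.+1 (updw w k r)); first by exists r.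
  exfalso; apply: ng.
  have hall' : forall r, good k.+1 (updw w k r).
    by move=> r; apply/not_notP => h; apply: hall; exists r.
  have [Jf hJf] := choice hall'.
  exists (\bigcup_(r in setT) Jf r); split.
    by apply: bigcup_finite => [|r _]; [exact: finite_finset | case: (hJf r)].
  move=> _ [t ht <-].
  have [_ hc] := hJf (t k).
  have : [set pi t0 | t0 in [set t0 | forall i, (i < k.+1)%N -> t0 i = updw w k (t k) i]] (pi t).
    exists t => //= i; rewrite ltnS leq_eqVlt => /orP[/eqP -> | hik].
      by rewrite /updw eqxx.
    by rewrite /updw (ltn_eqF hik) ht.
  move/hc => [j hj Uj].
  by exists j => //; exists (t k).
have [ch hch] : exists ch : nat -> (nat -> 'I_n) -> 'I_n,
    forall k w, ~ good k w -> ~ good k.+1 (updw w k (ch k w)).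
  have H1 : forall kw : nat * (nat -> 'I_n), exists r,
      ~ good kw.1 kw.2 -> ~ good kw.1.+1 (updw kw.2 kw.1 r).
    move=> [k w] /=.
    have [ng|g] := pselect (~ good k w); last by exists r0.
    by have [r hr] := step k w ng; exists r.
  have [c hc] := choice H1.
  by exists (fun k w => c (k, w)) => k w; apply: (hc (k, w)).
pose W := Wseq ch (fun _ => r0).
have inv : forall k, ~ good k (W k).
  elim=> [|k IH].
    move=> [J [fJ hJ]]; apply: nfin; exists J; split => //.
    move=> _ [t _ <-]; apply: hJ; by exists t.
  exact: hch.
pose sig := fun i => W i.+1 i.
have [i0 _ Ui0] := cov (pi sig) (ltac:(by exists sig)).
have [e e0 he] := Uo i0 (pi sig) Ui0.
have [k hk] := H e e0.
apply: (inv k); exists [set i0]; split; first exact: finite_set1.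
move=> _ [t ht <-]; exists i0 => //; apply: he.
rewrite /dball /=; apply: hk => i hi.
by rewrite /sig /W -(Wseq_agree _ _ hi) ht.
Qed.

Lemma ev_lt (R : realType) (e : nat -> R) : e @ \oo --> 0 ->
  forall eps, 0 < eps -> exists N, forall k, (N <= k)%N -> `|e k| < eps.
Proof.
move/cvgrPdist_lt => H eps heps.
have [N _ HN] := H eps heps.
exists N => k hk; have := HN k hk.
by rewrite /= sub0r normrN.
Qed.

Lemma phi_compE (R : realType) (n : nat) (phi : 'I_n -> nat -> R -> R) k t :
  phi_comp phi k t = phcm phi 1 k t.
Proof. by []. Qed.

Lemma series_mono (R : realType) (u : nat -> R) : (forall j, 0 <= u j) ->
  forall k m, (k <= m)%N -> series u k <= series u m.
Proof.
move=> u0 k m /subnKC <-; elim: (m - k)%N => [|p IH]; first by rewrite addn0.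
by rewrite addnS seriesSr; apply: le_trans IH _; rewrite lerDl.
Qed.

Unset Implicit Arguments.

Theorem corollary4p4 (R : realType) (X : Type) (d : X -> X -> R)
  (hmet : is_metric d) (hcomp : metric_complete d)
  (n : nat) (hn : (0 < n)%N)
  (f : 'I_n -> nat -> X -> X) (phi : 'I_n -> nat -> R -> R)
  (hcont : forall r i, (1 <= i)%N -> dcontinuous d (f r i))
  (hphi : forall r i, (1 <= i)%N -> comparison_function (phi r i))
  (hcontr : forall r i, (1 <= i)%N -> phi_contraction d (phi r i) (f r i))
  (A1 : set X) (hA1 : inHX d A1)
  (hbnd : exists M : R, forall i, (1 <= i)%N ->
            hausdorff d (IFS_image f i A1) A1 <= M)
  (hsum : forall t : R, 0 < t ->
            cvg (series (fun k : nat => phi_comp phi k.+1 t : R^o) @ \oo)) :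
  exists Astar : set X,
    [/\ inHX d Astar,
        (forall A, inHX d A ->
           (fun k : nat => hausdorff d (backward_traj f k A) Astar) @ \oo --> 0) &
        (forall B, inHX d B ->
           (forall A, inHX d A ->
              (fun k : nat => hausdorff d (backward_traj f k A) B) @ \oo --> 0) ->
           B = Astar)].
Proof.
have [d0 dE dS dT] := hmet.
pose r0 : 'I_n := Ordinal hn.
have [[a0 A1a0] cA1] := hA1.
have [D1 hD1] := compact_bnd hmet cA1 a0.
have [M hM] := hbnd.
pose K := Num.max 1 (M + 1 + D1).
have K0 : 0 < K by rewrite lt_max ltr01.
have hK : forall r i, (1 <= i)%N -> d a0 (f r i a0) <= K.
  move=> r i hi.
  pose c := phi_max phi i D1 + \big[Num.max/0]_(r' < n) d (f r' i a0) a0.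
  have hc : forall x, IFS_image f i A1 x -> exists y, A1 y /\ d x y <= c.
    move=> _ [r' _ [a Aa <-]]; exists a0; split => //.
    apply: le_trans (dT _ (f r' i a0) _) _.
    apply: lerD.
      apply: le_trans (hcontr r' i hi a a0) _.
      apply: le_trans (phi_max_ub phi r' i _) _.
      apply: phi_max_mono => r''.
      have [_ hm _] := hphi r'' i hi.
      by apply: hm => //; rewrite dS; exact: (hD1 a Aa).
    exact: (le_bigmax 0 (fun r' => d (f r' i a0) a0) r').
  have hne : A1 !=set0 by exists a0.
  have hlt : hexcess d (IFS_image f i A1) A1 < M + 1.
    apply: le_lt_trans (le_trans (hausdorff_ge_l _ _ _) (hM i hi)) _.
    by rewrite ltrDl ltr01.
  have [y [A1y hy]] := hexcess_lt hmet hne hc hlt (ltac:(by exists r => //; exists a0)).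
  apply: le_trans (dT a0 y _) _.
  apply: le_trans (_ : _ <= M + 1 + D1) _; last by rewrite le_max lexx orbT.
  rewrite addrC; apply: lerD; last exact: (hD1 y A1y).
  by rewrite dS ltW.
pose u := fun k : nat => phi_comp phi k.+1 K.
have u0 : forall j, 0 <= u j by move=> j; rewrite /u phi_compE phcm_ge0 // ltW.
pose s : nat -> R := fun m => series u m.
have hs : cvgn s by exact: (hsum K K0).
pose S := limn s.
have sle : forall m, s m <= S.
  apply: nondecreasing_cvgn_le => //.
  by move=> k m hkm; apply: series_mono.
pose e := fun k => S - s k.
have e0 : forall k, 0 <= e k by move=> k; rewrite /e subr_ge0.
have ecv : e @ \oo --> 0.
  rewrite -(subrr S); apply: cvgB => //; exact: cvg_cst.
pose x := fun (sg : nat -> 'I_n) k => compw f sg 1 k a0.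
have xstep : forall sg k, d (x sg k.+1) (x sg k.+2) <= u k.
  move=> sg k; rewrite /x (compw_S f sg 1 k.+1).
  apply: le_trans (compw_contr hmet hphi hcontr _ _ _ _ (leqnn 1)) _.
  rewrite /u phi_compE; apply: (phcm_mono hphi) => //.
  exact: hK.
have xchain : forall sg k p, d (x sg k.+1) (x sg (k + p).+1) <= s (k + p)%N - s k.
  move=> sg k; elim=> [|p IH].
    by rewrite addn0 subrr; have -> : d (x sg k.+1) (x sg k.+1) = 0 by apply/dE.
  apply: le_trans (dT _ (x sg (k + p).+1) _) _.
  rewrite addnS /s seriesSr addrAC; apply: lerD => //.
have xe : forall sg k m, (k <= m)%N -> d (x sg k.+1) (x sg m.+1) <= e k.
  move=> sg k m hkm; rewrite -(subnKC hkm).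
  apply: le_trans (xchain sg k (m - k)%N) _.
  by rewrite /e lerD2r sle.
have cauchy : forall sg eps, 0 < eps -> exists N, forall p q, (N <= p)%N -> (N <= q)%N ->
    d (x sg p) (x sg q) < eps.
  move=> sg eps heps.
  have [N0 hN0] := ev_lt ecv (divr_gt0 heps (ltr0n _ 2)).
  exists N0.+1 => -[|p] [|q] //; rewrite !ltnS => hp hq.
  apply: le_lt_trans (dT _ (x sg N0.+1) _) _.
  rewrite (splitr eps); apply: ler_ltD.
    by rewrite dS; apply: le_trans (xe sg N0 p hp) _; rewrite -[e N0]ger0_norm ?e0 // ltW ?hN0.
  apply: le_lt_trans (xe sg N0 q hq) _.
  by rewrite -[e N0]ger0_norm ?e0 // hN0.
have [pi hpi] := choice (fun sg => hcomp (x sg) (cauchy sg)).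
have pib : forall sg k, d (x sg k.+1) (pi sg) <= e k.
  move=> sg k; apply/ler_addgt0Pr => eps heps.
  have [N hN] := hpi sg eps heps.
  apply: le_trans (dT _ (x sg (maxn N k).+1) _) _.
  apply: lerD; first by apply: xe; rewrite leq_maxr.
  by apply/ltW/hN; apply: leqW; rewrite leq_maxl.
have agree : forall sg tau k, (forall i, (i < k.+2)%N -> sg i = tau i) ->
    x sg k.+1 = x tau k.+1.
  move=> sg tau k h; apply: compw_agree => i /andP[_ hi]; apply: h.
  by rewrite add1n in hi.
have pid : forall sg tau k, (forall i, (i < k.+2)%N -> sg i = tau i) ->
    d (pi sg) (pi tau) <= e k + e k.
  move=> sg tau k h.
  apply: le_trans (dT _ (x sg k.+1) _) _.
  apply: lerD; first by rewrite dS pib.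
  by rewrite (agree _ _ _ h) pib.
have cA : dcompact d (range pi).
  apply: (image_compact r0) => eps heps.
  have [N hN] := ev_lt ecv (divr_gt0 heps (ltr0n _ 2)).
  exists N.+2 => sg tau h.
  apply: le_lt_trans (pid sg tau N h) _.
  have := hN N (leqnn N); rewrite ger0_norm ?e0 // => hlt.
  by rewrite (splitr eps); apply: ltrD.
have KB : forall A DA, (forall a, A a -> d a0 a <= DA) ->
    forall k sg a, A a ->
    d (compw f sg 1 k.+1 a) (pi sg) <= phi_comp phi k.+1 (Num.max DA 1) + e k.
  move=> A DA hDA k sg a Aa.
  apply: le_trans (dT _ (x sg k.+1) _) _.
  apply: lerD; last exact: pib.
  apply: le_trans (compw_contr hmet hphi hcontr _ _ _ _ (leqnn 1)) _.
  rewrite phi_compE; apply: (phcm_mono hphi) => //.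
  by rewrite dS; apply: le_trans (hDA a Aa) _; rewrite le_max lexx.
have ccv : forall t, 0 < t -> (fun k => phi_comp phi k.+1 t + e k) @ \oo --> 0.
  move=> t t0; rewrite -[0]addr0; apply: cvgD => //.
  exact: (cvg_series_cvg_0 (hsum t t0)).
have traj : forall k A y, backward_traj f k A y <-> exists sg a, A a /\ y = compw f sg 1 k a.
  by move=> k A y; exact: (traj_char f r0 A 1 k y).
have cvA : forall A, inHX d A ->
    (fun k => hausdorff d (backward_traj f k A) (range pi)) @ \oo --> 0.
  move=> A [[aA Aa] cA'].
  have [DA hDA] := compact_bnd hmet cA' a0.
  have t0 : 0 < Num.max DA 1 by rewrite lt_max ltr01 orbT.
  rewrite -cvg_shiftS.
  apply: (@squeeze_cvgr _ _ _ _ (fun=> 0) (fun k => phi_comp phi k.+1 (Num.max DA 1) + e k)); last 2 first.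
  - exact: cvg_cst.
  - exact: ccv.
  apply: nearW => k /=; apply/andP; split.
    apply: le_trans (hausdorff_ge_l _ _ _).
    by apply: hexcess_ge0 => //; exists (pi (fun=> r0)).
  apply: hausdorff_le.
    apply: hexcess_le => //.
      by exists (compw f (fun=> r0) 1 k.+1 aA); apply/traj; exists (fun=> r0), aA.
    move=> y /traj [sg [a [Ab ->]]]; exists (pi sg); split; first by exists sg.
    exact: (KB A DA hDA k sg a Ab).
  apply: hexcess_le => //; first by exists (pi (fun=> r0)), (fun=> r0).
  move=> _ [sg _ <-]; exists (compw f sg 1 k.+1 aA); split.
    by apply/traj; exists sg, aA.
  by rewrite dS; exact: (KB A DA hDA k sg aA Aa).
have pia0 : forall sg, d (pi sg) a0 <= e 0 + K.
  move=> sg; apply: le_trans (dT _ (x sg 1) _) _.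
  apply: lerD; first by rewrite dS pib.
  by rewrite dS; exact: hK.
exists (range pi); split => //.
  by split => //; exists (pi (fun=> r0)), (fun=> r0).
move=> B [[b0 Bb0] cB] hconv.
have [DB hDB] := compact_bnd hmet cB a0.
have hP := hconv A1 hA1; rewrite -cvg_shiftS in hP.
have t1 : 0 < Num.max D1 1 by rewrite lt_max ltr01 orbT.
have hc := ccv _ t1.
have pick : forall eps : R, 0 < eps -> exists k,
    hausdorff d (backward_traj f k.+1 A1) B < eps /\ phi_comp phi k.+1 (Num.max D1 1) + e k < eps.
  move=> eps heps.
  have [N1 hN1] := ev_lt hP heps.
  have [N2 hN2] := ev_lt hc heps.
  exists (maxn N1 N2); split.
    by apply: le_lt_trans (ler_norm _) _; apply: hN1; rewrite leq_maxl.
  by apply: le_lt_trans (ler_norm _) _; apply: hN2; rewrite leq_maxr.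
have Pne : forall k, backward_traj f k A1 !=set0.
  by move=> k; exists (compw f (fun=> r0) 1 k a0); apply/traj; exists (fun=> r0), a0.
have heps2 : forall eps : R, 0 < eps -> 0 < eps / 2.
  by move=> eps heps; apply: divr_gt0 => //; rewrite ltr0n.
apply/seteqP; split.
  move=> y By; apply: (dcompact_closed hmet cA) => eps heps.
  have [k [hk1 hk2]] := pick _ (heps2 _ heps).
  pose p0 := compw f (fun=> r0) 1 k.+1 a0.
  have hbd : forall z, B z -> exists w, backward_traj f k.+1 A1 w /\ d z w <= DB + d a0 p0.
    move=> z Bz; exists p0; split; first by apply/traj; exists (fun=> r0), a0.
    apply: le_trans (dT _ a0 _) _; apply: lerD => //.
    by rewrite dS; exact: hDB.
  have hlt : hexcess d B (backward_traj f k.+1 A1) < eps / 2.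
    exact: le_lt_trans (hausdorff_ge_r _ _ _) hk1.
  have [p [/traj [sg [a [Aa ->]]] hp]] := hexcess_lt hmet (Pne k.+1) hbd hlt By.
  exists (pi sg); split; first by exists sg.
  apply: le_lt_trans (dT _ (compw f sg 1 k.+1 a) _) _.
  rewrite (splitr eps); apply: ltr_leD => //.
  apply: le_trans (KB A1 D1 hD1 k sg a Aa) _.
  exact: ltW.
move=> _ [sg _ <-]; apply: (dcompact_closed hmet cB) => eps heps.
have [k [hk1 hk2]] := pick _ (heps2 _ heps).
pose p := compw f sg 1 k.+1 a0.
have hbd : forall z, backward_traj f k.+1 A1 z -> exists w, B w /\ d z w <= phi_comp phi k.+1 (Num.max D1 1) + e k + (e 0 + K + d a0 b0).
  move=> _ /traj [tau [a [Aa ->]]]; exists b0; split => //.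
  apply: le_trans (dT _ (pi tau) _) _; apply: lerD; first exact: (KB A1 D1 hD1 k tau a Aa).
  apply: le_trans (dT _ a0 _) _; apply: lerD => //; exact: pia0.
have hlt : hexcess d (backward_traj f k.+1 A1) B < eps / 2.
  exact: le_lt_trans (hausdorff_ge_l _ _ _) hk1.
have Pp : backward_traj f k.+1 A1 p by apply/traj; exists sg, a0.
have [b [Bb hb]] := hexcess_lt hmet (ex_intro _ b0 Bb0) hbd hlt Pp.
exists b; split => //.
apply: le_lt_trans (dT _ p _) _.
rewrite (splitr eps); apply: ler_ltD => //.
rewrite dS; apply: le_trans (KB A1 D1 hD1 k sg a0 A1a0) _.
exact: ltW.
Qed.
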